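(* For $n\ge 2$ let $G_n$ be the intersection graph of the $\binom{n}{2}$ closed intervals $[i,j]$, $1\le i<j\le n$. Then $c(G_n)\le p(G_n)\le \log n+1$, where $\log$ is base $2$.
   Context: A comparability graph is a graph admitting a transitive orientation. $p(G)$ is the minimum number $m$ such that $E(G)$ is the union of the edge sets of $m$ pairwise edge-disjoint comparability subgraphs of $G$; $c(G)$ is the minimum number of comparability subgraphs of $G$ (not necessarily edge-disjoint) whose edge sets cover $E(G)$. *)

(* Defs.v *)
From Stdlib Require Import Reals.
From mathcomp Require Import all_boot.

Set Implicit Arguments.
Unset Strict Implicit.
Unset Printing Implicit Defensive.

Section Graphs.
Variable T : finType.

Definition edges (e : rel T) : {set {set T}} :=
  [set [set xy.1; xy.2] | xy : T * T & (xy.1 != xy.2) && e xy.1 xy.2].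

Definition trans_orientation (F : {set {set T}}) (O : {set T * T}) : bool :=
  [&& [forall u, forall v, ((u, v) \in O) ==> ((u != v) && ([set u; v] \in F))],
      [forall u, forall v, ((u != v) && ([set u; v] \in F)) ==>
                           (((u, v) \in O) (+) ((v, u) \in O))] &
      [forall u, forall v, forall w,
         ((u, v) \in O) && ((v, w) \in O) ==> ((u, w) \in O)]].

Definition comparability (F : {set {set T}}) : bool :=
  [exists O : {set T * T}, trans_orientation F O].

Definition comp_subgraph (e : rel T) (F : {set {set T}}) : bool :=
  (F \subset edges e) && comparability F.

Definition has_comp_partition (e : rel T) (m : nat) : bool :=
  [exists Fs : {ffun 'I_m -> {set {set T}}},
    [&& [forall i, comp_subgraph e (Fs i)],
        [forall i, forall j, (i != j) ==> [disjoint Fs i & Fs j]] &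
        (\bigcup_(i < m) Fs i == edges e)]].

Definition has_comp_cover (e : rel T) (m : nat) : bool :=
  [exists Fs : {ffun 'I_m -> {set {set T}}},
    [forall i, comp_subgraph e (Fs i)] &&
    (\bigcup_(i < m) Fs i == edges e)].

(* Existence: each edge alone is a comparability subgraph. *)
Lemma single_comparability (u v : T) : u != v -> comparability [set [set u; v]].
Proof.
move=> uv; apply/existsP; exists [set (u, v)].
apply/and3P; split.
- apply/forallP=> x; apply/forallP=> y; apply/implyP.
  rewrite in_set1 => /eqP [-> ->]; by rewrite uv in_set1 eqxx.
- apply/forallP=> x; apply/forallP=> y; apply/implyP=> /andP [xy].
  rewrite in_set1 => /eqP E.
  have: x \in [set u; v] by rewrite -E !inE eqxx.
  have: y \in [set u; v] by rewrite -E !inE eqxx orbT.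
  rewrite !inE !xpair_eqE => Hy Hx.
  have vu : (v == u) = false by rewrite eq_sym (negbTE uv).
  case/orP: Hx => /eqP Hx; case/orP: Hy => /eqP Hy; subst x y;
    by rewrite ?eqxx ?vu ?(negbTE uv) in xy *.
- apply/forallP=> x; apply/forallP=> y; apply/forallP=> z; apply/implyP.
  rewrite !in_set1 !xpair_eqE => /andP [/andP [/eqP -> /eqP ->] /andP [/eqP E _]].
  by rewrite E eqxx in uv.
Qed.

Lemma has_comp_partition_ex (e : rel T) : exists m, has_comp_partition e m.
Proof.
exists #|edges e|; apply/existsP.
exists [ffun i => [set enum_val i]]; apply/and3P; split.
- apply/forallP=> i; rewrite ffunE; apply/andP; split.
    by rewrite sub1set enum_valP.
  have := enum_valP i; case/imsetP=> [[x y]] /=.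
  by rewrite inE /= => /andP [xy _] ->; apply: single_comparability.
- apply/forallP=> i; apply/forallP=> j; apply/implyP=> ij.
  rewrite !ffunE disjoints1 in_set1; apply: contra ij => /eqP.
  by move/enum_val_inj ->.
- apply/eqP/setP=> E; apply/bigcupP/idP.
    by case=> i _; rewrite ffunE in_set1 => /eqP ->; apply: enum_valP.
  move=> EE; exists (enum_rank_in EE E) => //.
  by rewrite ffunE enum_rankK_in // in_set1.
Qed.

Lemma has_comp_cover_ex (e : rel T) : exists m, has_comp_cover e m.
Proof.
case: (has_comp_partition_ex e) => m /existsP [Fs /and3P [H1 _ H3]].
by exists m; apply/existsP; exists Fs; rewrite H1 H3.
Qed.

Definition pG (e : rel T) : nat := ex_minn (has_comp_partition_ex e).

Definition cG (e : rel T) : nat := ex_minn (has_comp_cover_ex e).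

End Graphs.

(* G_n: vertices are the pairs (i,j) with 0 <= i < j < n, standing for the
   closed intervals [i+1, j+1] (1 <= i+1 < j+1 <= n); two distinct intervals
   are adjacent iff they intersect. *)
Definition interval_vertex (n : nat) := {ij : 'I_n * 'I_n | ij.1 < ij.2}.

Definition interval_adj (n : nat) : rel (interval_vertex n) :=
  fun a b => maxn (val a).1 (val b).1 <= minn (val a).2 (val b).2.
Arguments interval_adj n : clear implicits.

(* Main.v *)
Require Import Defs.
From Stdlib Require Import Reals Lra.
From mathcomp Require Import all_boot.
From mathcomp Require Import zify.

Section Abstract.
Variables (T : finType) (e : rel T) (k : nat) (phi : T -> 'I_k.+1).
Hypothesis esym : forall u v, e u v = e v u.
Hypothesis htr : forall u v w, phi u = phi v -> phi v = phi w ->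
  e u v -> e v w -> e u w.

Definition cls u v : 'I_k.+1 :=
  if phi u == phi v then ord0 else if phi u < phi v then phi v else phi u.

Lemma clsC u v : cls u v = cls v u.
Proof.
rewrite /cls eq_sym; case: eqP => [//|ne].
case: ltngtP => // h; exact: val_inj.
Qed.

Lemma set2_sym (P : T -> T -> Prop) : (forall a b, P a b -> P b a) ->
  forall u v u' v', [set u; v] = [set u'; v'] -> P u' v' -> P u v.
Proof.
move=> Ps u v u' v' E H.
have: u \in [set u'; v'] by rewrite -E !inE eqxx.
have: v \in [set u'; v'] by rewrite -E !inE eqxx orbT.
have: u' \in [set u; v] by rewrite E !inE eqxx.
have: v' \in [set u; v] by rewrite E !inE eqxx orbT.
rewrite !inE => /orP[]/eqP ? /orP[]/eqP ? /orP[]/eqP ? /orP[]/eqP ?; subst; auto.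
Qed.

Definition Fs : {ffun 'I_k.+1 -> {set {set T}}} :=
  [ffun i => [set [set xy.1; xy.2] | xy : T * T &
     [&& xy.1 != xy.2, e xy.1 xy.2 & cls xy.1 xy.2 == i]]].

Definition dir u v :=
  if phi u == phi v then enum_rank u < enum_rank v else phi u < phi v.

Definition Or i : {set T * T} :=
  [set xy | [&& xy.1 != xy.2, e xy.1 xy.2, cls xy.1 xy.2 == i & dir xy.1 xy.2]].

Lemma memFs i u v : u != v -> ([set u; v] \in Fs i) = e u v && (cls u v == i).
Proof.
move=> uv; rewrite ffunE; apply/imsetP/andP.
- case=> [[x y]]; rewrite inE /= => /and3P[xy exy /eqP cxy] E.
  have [] : e u v /\ cls u v = i.
    apply: (@set2_sym (fun a b => e a b /\ cls a b = i) _ _ _ _ _ E) => //.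
    by move=> a b [H1 H2]; rewrite esym clsC.
  by move=> -> ->.
- case=> euv cuv; exists (u, v) => //; by rewrite inE /= uv euv cuv.
Qed.

Lemma abstract_partition : has_comp_partition e k.+1.
Proof.
apply/existsP; exists Fs; apply/and3P; split.
- apply/forallP => i; apply/andP; split.
    apply/subsetP => E; rewrite ffunE => /imsetP[[x y]].
    rewrite inE /= => /and3P[xy exy _] ->; apply/imsetP; exists (x, y) => //.
    by rewrite inE /= xy exy.
  apply/existsP; exists (Or i); apply/and3P; split.
  + apply/forallP => u; apply/forallP => v; apply/implyP.
    rewrite inE /= => /and4P[uv euv cuv _]; by rewrite uv memFs // euv cuv.
  + apply/forallP => u; apply/forallP => v; apply/implyP.
    move/andP=> [uv]; rewrite memFs // => /andP[euv /eqP cuv].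
    rewrite !inE /= uv (eq_sym v) uv (esym v) euv (clsC v) cuv eqxx /=.
    rewrite /dir eq_sym; case: eqP => h.
    * case: (ltngtP (enum_rank u) (enum_rank v)) => // E.
      by move: uv; rewrite (enum_rank_inj (ord_inj E)) eqxx.
    * case: (ltngtP (phi u) (phi v)) => // E.
      by case: h; apply: ord_inj.
  + apply/forallP => u; apply/forallP => v; apply/forallP => w; apply/implyP.
    rewrite !inE /= => /andP[/and4P[uv euv /eqP cuv duv] /and4P[vw evw /eqP cvw dvw]].
    move: cuv cvw duv dvw; rewrite /dir /cls.
    case: (eqVneq (phi u) (phi v)) => [puv|puv] cuv.
    * case: (eqVneq (phi v) (phi w)) => [pvw|pvw] cvw duv dvw.
      -- have puw : phi u = phi w by rewrite puv.
         have ruw := ltn_trans duv dvw.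
         have euw : e u w := htr _ _ _ puv pvw euv evw.
         have uw : u != w by apply: contraTneq ruw => ->; rewrite ltnn.
         by rewrite uw euw puw eqxx ruw -cuv eqxx.
      -- rewrite dvw in cvw; move: dvw; by rewrite cvw -cuv.
    * move=> cvw duv dvw; rewrite duv in cuv; move: cvw dvw.
      case: (eqVneq (phi v) (phi w)) => [pvw|pvw] cvw dvw.
      -- by move: duv; rewrite cuv -cvw.
      -- rewrite dvw in cvw; move: dvw; by rewrite cuv -cvw ltnn.
- apply/forallP => i; apply/forallP => j; apply/implyP => ij.
  apply/pred0P => E /=; apply/negbTE/negP => /andP[].
  rewrite ffunE => /imsetP[[x y]].
  rewrite inE /= => /and3P[xy exy /eqP cxy] ->.
  by rewrite memFs // exy cxy (negbTE ij).
- apply/eqP/setP => E; apply/bigcupP/idP.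
  + case=> i _; rewrite ffunE => /imsetP[[x y]].
    rewrite inE /= => /and3P[xy exy _] ->; apply/imsetP; exists (x, y) => //.
    by rewrite inE /= xy exy.
  + case/imsetP => [[x y]]; rewrite inE /= => /andP[xy exy] ->.
    by exists (cls x y) => //; rewrite memFs // exy eqxx.
Qed.

End Abstract.

Definition phiI n (x : interval_vertex n) : 'I_(trunc_log 2 n).+1 :=
  [arg max_(l > ord0 | (val x).1 %/ 2 ^ l < (val x).2 %/ 2 ^ l) (l : nat)].
Arguments phiI {n}.

Lemma phiP {n} (x : interval_vertex n) :
  ((val x).1 %/ 2 ^ phiI x < (val x).2 %/ 2 ^ phiI x) /\
  ((val x).1 %/ 2 ^ phiI x) %/ 2 = ((val x).2 %/ 2 ^ phiI x) %/ 2.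
Proof.
rewrite /phiI; case: arg_maxnP => [|l Pl Hmax].
  by rewrite expn0 !divn1; exact: (valP x).
split => //; rewrite -!divnMA -expnSr.
have ij : (val x).1 <= (val x).2 := ltnW (valP x).
case: (ltnP l (trunc_log 2 n)) => hl.
- have np : ~~ ((val x).1 %/ 2 ^ l.+1 < (val x).2 %/ 2 ^ l.+1).
    apply/negP => /(Hmax (Ordinal (hl : l.+1 < (trunc_log 2 n).+1))) /=.
    by rewrite ltnn.
  rewrite -leqNgt in np.
  by apply/eqP; rewrite eqn_leq np leq_div2r.
- have -> : (l : nat) = trunc_log 2 n.
    by apply/eqP; rewrite eqn_leq hl -ltnS ltn_ord.
  have hn := trunc_log_ltn n (isT : 1 < 2).
  have hj : (val x).2 < n := ltn_ord _.
  rewrite !divn_small //; [exact: ltn_trans hj hn | exact: leq_ltn_trans ij (ltn_trans hj hn)].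
Qed.

Lemma blk1 (a b c d : nat) : a < b -> a %/ 2 = b %/ 2 -> c < d -> c %/ 2 = d %/ 2 ->
  a <= d -> c <= b -> a %/ 2 = c %/ 2.
Proof. move=> *; lia. Qed.

Lemma blk2 (a b c d : nat) : a < b -> a %/ 2 = b %/ 2 -> c < d -> c %/ 2 = d %/ 2 ->
  a %/ 2 = c %/ 2 -> a < d.
Proof. move=> *; lia. Qed.

Lemma adj_le (a b c d : nat) : maxn a c <= minn b d -> a <= d /\ c <= b.
Proof. move=> *; lia. Qed.

Lemma adj_ge (a b c d : nat) : a < b -> c < d -> a < d -> c < b -> maxn a c <= minn b d.
Proof. move=> *; lia. Qed.

Lemma div_lt (d a b : nat) : a %/ d < b %/ d -> a < b.
Proof. by move=> h; rewrite ltnNge; apply/negP => /(leq_div2r d); rewrite leqNgt h. Qed.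

Lemma htrI n (u v w : interval_vertex n) : phiI u = phiI v -> phiI v = phiI w ->
  interval_adj n u v -> interval_adj n v w -> interval_adj n u w.
Proof.
move=> puv pvw; rewrite /interval_adj.
have [hu1 hu2] := phiP u; have [hv1 hv2] := phiP v; have [hw1 hw2] := phiP w.
rewrite -puv in hv1 hv2; rewrite -pvw -puv in hw1 hw2.
move=> /adj_le [a1 a2] /adj_le [a3 a4].
have e1 := leq_div2r (2 ^ phiI u) a1.
have e2 := leq_div2r (2 ^ phiI u) a2.
have e3 := leq_div2r (2 ^ phiI u) a3.
have e4 := leq_div2r (2 ^ phiI u) a4.
have b1 := @blk1 _ _ _ _ hu1 hu2 hv1 hv2 e1 e2.
have b2 := @blk1 _ _ _ _ hv1 hv2 hw1 hw2 e3 e4.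
have b3 : (val u).1 %/ 2 ^ phiI u %/ 2 = (val w).1 %/ 2 ^ phiI u %/ 2.
  by rewrite b1 b2.
apply: adj_ge; [exact: (valP u) | exact: (valP w) | |].
- exact: (@div_lt (2 ^ phiI u) _ _) (@blk2 _ _ _ _ hu1 hu2 hw1 hw2 b3).
- exact: (@div_lt (2 ^ phiI u) _ _) (@blk2 _ _ _ _ hw1 hw2 hu1 hu2 (esym b3)).
Qed.

Section RealPart.
Local Open Scope R_scope.

Lemma INR_expn2 (k : nat) : INR (2 ^ k)%N = pow (INR 2) k.
Proof.
elim: k => [|k IH]; first by rewrite expn0.
by rewrite expnS mult_INR IH.
Qed.

Lemma real_bound (n : nat) : (0 < n)%N ->
  Rle (INR (trunc_log 2 n).+1) (Rplus (Rdiv (ln (INR n)) (ln (INR 2))) (INR 1)).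
Proof.
move=> n0.
set K := trunc_log 2 n.
have hK : (2 ^ K <= n)%N := trunc_logP (isT : (1 < 2)%N) n0.
have l2 : 0 < ln (INR 2).
  rewrite -ln_1; apply: ln_increasing; simpl; lra.
have p2 : 0 < INR 2 by simpl; lra.
have pw : pow (INR 2) K <= INR n by rewrite -INR_expn2; apply: le_INR; apply/leP.
have lw : ln (pow (INR 2) K) <= ln (INR n).
  case: (Rle_lt_or_eq_dec _ _ pw) => h; last by rewrite h; apply: Rle_refl.
  apply: Rlt_le; apply: ln_increasing => //; exact: pow_lt.
rewrite ln_pow // in lw.
rewrite S_INR; apply: Rplus_le_compat_r.
apply: (Rmult_le_reg_r (ln (INR 2))) => //.
replace (ln (INR n) / ln (INR 2) * ln (INR 2)) with (ln (INR n)) => //.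
field; lra.
Qed.

End RealPart.

Lemma esymI n (u v : interval_vertex n) : interval_adj n u v = interval_adj n v u.
Proof. by rewrite /interval_adj maxnC minnC. Qed.

Theorem theorem8 (n : nat) (hn : 2 <= n) :
  cG (interval_adj n) <= pG (interval_adj n) /\
  Rle (INR (pG (interval_adj n))) (Rplus (Rdiv (ln (INR n)) (ln (INR 2))) (INR 1)).
Proof.
have hpart : has_comp_partition (interval_adj n) (trunc_log 2 n).+1 :=
  @abstract_partition _ (interval_adj n) _ phiI (@esymI n) (@htrI n).
have hp : pG (interval_adj n) <= (trunc_log 2 n).+1.
  by rewrite /pG; case: ex_minnP => m _ Hm; apply: Hm.
split.
- rewrite /cG; case: ex_minnP => m _ Hm; apply: Hm.
  rewrite /pG; case: ex_minnP => p /existsP[Fs /and3P[H1 _ H3]] _.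
  by apply/existsP; exists Fs; rewrite H1 H3.
- have n0 : 0 < n by apply: leq_trans hn.
  apply: (Rle_trans _ _ _ _ (real_bound n n0)).
  by apply: le_INR; apply/leP.
Qed.
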